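(* Let $G=(V,E)$ be a finite, undirected, connected, vertex-transitive graph with unit edge weights and vertex set $V=\{v_1,\dots,v_N\}$, let $L=D-A$ be its graph Laplacian, and let $\phi_{\lambda_1},\dots,\phi_{\lambda_N}$ be an orthonormal basis of $\mathbb{C}^N$ of eigenvectors of $L$. For $t\ge 0$ let $H_t=e^{-tL}$, $D_i(t)=\operatorname{diag}(H_t(\cdot,v_i))$ and $\psi_{ij}(t)=D_i(t)\phi_{\lambda_j}$. Then for every $t\in[0,\infty)$ the family $\{\psi_{ij}(t)\}_{i,j=1}^N$ is a tight frame for $\mathbb{C}^N$.
   Context: $L=D-A$ with $A$ the adjacency matrix and $D$ the diagonal degree matrix. $H_t(\cdot,v_i)$ is the $i$-th column of $H_t$ and $\operatorname{diag}(x)$ the diagonal matrix with diagonal $x$. An automorphism of $G$ is a permutation $\pi$ of $V$ with $(u,v)\in E$ iff $(\pi(u),\pi(v))\in E$; $G$ is vertex-transitive if for all $u,v\in V$ there is an automorphism $\pi$ with $\pi(u)=v$. A frame $\{\psi_k\}$ for $\mathbb{C}^N$ is tight if there is $A>0$ with $\sum_k|\langle f,\psi_k\rangle|^2=A\|f\|^2$ for all $f\in\mathbb{C}^N$. *)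

(* Defs.v *)
From HB Require Import structures.
From mathcomp Require Import all_boot all_order all_algebra.
From mathcomp Require Import all_classical all_reals all_analysis.
From mathcomp Require Import complex.
From mathcomp Require Import fingroup perm.
Set Implicit Arguments. Unset Strict Implicit. Unset Printing Implicit Defensive.
Import Order.TTheory GRing.Theory Num.Theory.
Import numFieldNormedType.Exports.
Local Open Scope ring_scope.

(* A finite simple undirected graph on vertex set 'I_N = {v_1,...,v_N}
   is a symmetric irreflexive relation e (unit edge weights). *)
Definition simple_graph (N : nat) (e : rel 'I_N) : Prop :=
  symmetric e /\ irreflexive e.

Definition connected_graph (N : nat) (e : rel 'I_N) : Prop :=
  forall u v : 'I_N, connect e u v.

Definition graph_automorphism (N : nat) (e : rel 'I_N) (pi : {perm 'I_N}) : Prop :=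
  forall u v : 'I_N, e u v = e (pi u) (pi v).

Definition vertex_transitive (N : nat) (e : rel 'I_N) : Prop :=
  forall u v : 'I_N, exists pi : {perm 'I_N},
    graph_automorphism e pi /\ pi u = v.

Definition adjacency_mx (R : pzRingType) (N : nat) (e : rel 'I_N) : 'M[R]_N :=
  \matrix_(i, j) (e i j)%:R.

Definition degree_mx (R : pzRingType) (N : nat) (e : rel 'I_N) : 'M[R]_N :=
  \matrix_(i, j) ((i == j)%:R * (#|[set k | e i k]|)%:R).

Definition laplacian (R : pzRingType) (N : nat) (e : rel 'I_N) : 'M[R]_N :=
  degree_mx R e - adjacency_mx R e.

Definition expmx (R : realType) (N : nat) (A : 'M[R]_N) : 'M[R]_N :=
  limn (series (fun k => (k`!%:R)^-1 *: A ^+ k)).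

Definition heat_kernel (R : realType) (N : nat) (e : rel 'I_N) (t : R) : 'M[R]_N :=
  expmx (- (t *: laplacian R e)).

Definition cmx (R : realType) (m n : nat) (M : 'M[R]_(m, n)) : 'M[R[i]]_(m, n) :=
  map_mx (real_complex R) M.

Definition cdot (R : realType) (N : nat) (f g : 'cV[R[i]]_N) : R[i] :=
  \sum_(k < N) f k 0 * conjc (g k 0).

Definition heat_diag (R : realType) (N : nat) (e : rel 'I_N) (t : R) (i : 'I_N)
  : 'M[R[i]]_N :=
  diag_mx (cmx (col i (heat_kernel e t)))^T.

Definition tight_frame (R : realType) (N : nat) (I : finType)
  (psi : I -> 'cV[R[i]]_N) : Prop :=
  exists A : R, 0 < A /\
    forall f : 'cV[R[i]]_N,
      \sum_(k : I) `|cdot f (psi k)| ^+ 2 = real_complex R A * cdot f f.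

(* Main.v *)
Require Import Defs.
From HB Require Import structures.
From mathcomp Require Import all_boot all_order all_algebra.
From mathcomp Require Import all_classical all_reals all_analysis.
From mathcomp Require Import complex.
From mathcomp Require Import fingroup perm.
From mathcomp Require Import ring lra.
Import Order.TTheory GRing.Theory Num.Theory.
Import numFieldNormedType.Exports.
Local Open Scope classical_set_scope.
Local Open Scope ring_scope.

HB.instance Definition _ (R : realType) (m n : nat) := Complete.on 'M[R]_(m, n).

Section Analytic.
Variable R : realType.

Lemma entry_le_norm m n (M : 'M[R]_(m, n)) i j : `|M i j| <= `|M|.
Proof.
have -> : `|M| = mx_norm M by []. rewrite mx_normrE; apply/bigmax_geP; right => /=.
by exists (i, j).
Qed.

Lemma norm_le m n (M : 'M[R]_(m, n)) c :
  0 <= c -> (forall i j, `|M i j| <= c) -> `|M| <= c.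
Proof.
move=> c0 H; have -> : `|M| = mx_norm M by []. rewrite mx_normrE; apply/bigmax_leP; split => //.
Qed.

Lemma norm_mul {m N p} (A : 'M[R]_(m, N)) (B : 'M[R]_(N, p)) :
  `|A *m B| <= N%:R * `|A| * `|B|.
Proof.
apply: norm_le; first by rewrite !mulr_ge0.
move=> i j; rewrite mxE.
apply: le_trans (ler_norm_sum _ _ _) _.
apply: le_trans (_ : \sum_(k < N) (`|A| * `|B|) <= _).
  apply: ler_sum => k _; rewrite normrM.
  by apply: ler_pM => //; exact: entry_le_norm.
by rewrite sumr_const card_ord -mulrA mulr_natl.
Qed.

Lemma norm_pow N (B : 'M[R]_N) k : `|B ^+ k| <= (N%:R * `|B|) ^+ k.
Proof.
elim: k => [|k IH].
  rewrite expr0; apply: norm_le => // i j.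
  rewrite /= mxE expr0; case: (i == j) => /=; by rewrite ?normr1 ?normr0.
rewrite exprSr exprSr.
have -> : B ^+ k * B = B ^+ k *m B by [].
apply: le_trans (norm_mul (B ^+ k) B) _.
have -> : N%:R * `|B ^+ k| * `|B| = `|B ^+ k| * (N%:R * `|B|) by ring.
by apply: ler_wpM2r => //; rewrite mulr_ge0.
Qed.

Definition expser {N} (B : 'M[R]_N) := fun k : nat => (k`!%:R)^-1 *: B ^+ k.

Lemma expmx_cvg {N} (B : 'M[R]_N) : cvgn (series (expser B)).
Proof.
apply: normed_cvg.
apply: (@series_le_cvg R _ (exp_coeff (N%:R * `|B|))).
- by move=> n /=.
- move=> n; apply: exp_coeff_ge0; by rewrite mulr_ge0.
- move=> n /=; rewrite /expser normrZ /exp_coeff /= mulrC.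
  rewrite ger0_norm ?invr_ge0 //; apply: ler_wpM2r; first by rewrite invr_ge0.
  exact: norm_pow.
- exact: is_cvg_series_exp_coeff.
Qed.

Lemma expmx_entry {N} (B : 'M[R]_N) a b :
  (fun n => series (expser B) n a b) @ \oo --> expmx B a b.
Proof.
have h := expmx_cvg B.
exact: (continuous_cvg _ (@coord_continuous R N N a b _) h).
Qed.


Lemma series_entry {N} (B : 'M[R]_N) n a b :
  series (expser B) n a b = \sum_(0 <= j < n) (j`!%:R)^-1 * (B ^+ j) a b.
Proof.
by rewrite /series /= summxE; apply: eq_bigr => j _; rewrite !mxE.
Qed.

Lemma expmx_rowsum {N} (B : 'M[R]_N) k :
  (forall k, \sum_i B k i = 0) -> \sum_i expmx B k i = 1.
Proof.
move=> hB.
have rs : forall j, \sum_i (B ^+ j) k i = (j == 0)%:R.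
  case=> [|j].
    rewrite expr0 (bigD1 k) //= big1 => [|i /negPf ik]; rewrite mxE.
      by rewrite eqxx addr0.
    by rewrite eq_sym ik.
  rewrite exprSr.
  have -> : B ^+ j * B = B ^+ j *m B by [].
  under eq_bigr do rewrite mxE.
  rewrite exchange_big /= big1 // => l _.
  by rewrite -mulr_sumr hB mulr0.
have partial : forall n, \sum_i series (expser B) n.+1 k i = 1.
  move=> n; under eq_bigr do rewrite series_entry.
  rewrite exchange_big /= big_nat_recl // -mulr_sumr rs /= mulr1 invr1.
  by rewrite big1_seq ?addr0 // => j _; rewrite -mulr_sumr rs /= mulr0.
have h1 : (fun n => \sum_i series (expser B) n k i) @ \oo --> \sum_i expmx B k i.
  apply: (@cvg_big R 'I_N +%R 0 xpredT add_continuous) => // i _.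
  exact: expmx_entry.
have h2 : (fun n => \sum_i series (expser B) n k i) @ \oo --> (1 : R).
  apply: cvg_near_cst; exists 1%N => // n /= hn.
  by case: n hn => // n _; exact: partial.
exact: (cvg_unique _ h1 h2).
Qed.

Lemma expmx_perm {N} (B : 'M[R]_N) (pi : {perm 'I_N}) :
  (forall a b, B (pi a) (pi b) = B a b) ->
  forall a b, expmx B (pi a) (pi b) = expmx B a b.
Proof.
move=> hB.
have inv : forall j a b, (B ^+ j) (pi a) (pi b) = (B ^+ j) a b.
  elim=> [|j IH] a b.
    by rewrite expr0 !mxE (inj_eq perm_inj).
  rewrite exprSr.
  have -> : B ^+ j * B = B ^+ j *m B by [].
  rewrite !mxE (reindex_inj (@perm_inj _ pi)) /=.
  by apply: eq_bigr => l _; rewrite IH hB.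
move=> a b.
have e : (fun n => series (expser B) n (pi a) (pi b)) =
         (fun n => series (expser B) n a b).
  apply: funext => n; rewrite !series_entry.
  by apply: eq_bigr => j _; rewrite inv.
have h1 := expmx_entry B (pi a) (pi b).
rewrite e in h1.
exact: (cvg_unique _ h1 (expmx_entry B a b)).
Qed.

End Analytic.

Section Complex.
Variable R : realType.

Lemma conj_realM (a : R) (b : R[i]) :
  conjc (real_complex R a * b) = real_complex R a * conjc b.
Proof. case: b => x y. rewrite /conjc -complexr0 /=. congr (_ +i* _)%C; ring. Qed.

Lemma nc (x : R[i]) : `|x| ^+ 2 = x * conjc x.
Proof. exact: normCK. Qed.

Lemma parseval N (phi : 'I_N -> 'cV[R[i]]_N) :
  (forall j k, cdot (phi j) (phi k) = (j == k)%:R) ->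
  forall g, \sum_j `|cdot g (phi j)| ^+ 2 = cdot g g.
Proof.
move=> ortho g.
pose P := \matrix_(m, j) phi j m 0 : 'M[R[i]]_N.
pose Q := \matrix_(j, m) conjc (phi j m 0) : 'M[R[i]]_N.
have QP : Q *m P = 1%:M.
  apply/matrixP => j k; rewrite !mxE.
  have := ortho k j; rewrite /cdot => h.
  rewrite eq_sym -h; apply: eq_bigr => m _; rewrite !mxE mulrC //.
have PQ := mulmx1C QP.
have pq : forall m m', \sum_j phi j m 0 * conjc (phi j m' 0) = (m == m')%:R.
  move=> m m'; move/matrixP: PQ => /(_ m m'); rewrite !mxE => <-.
  by apply: eq_bigr => j _; rewrite !mxE.
transitivity (\sum_j \sum_m \sum_m' ((g m 0 * conjc (g m' 0)) * (phi j m' 0 * conjc (phi j m 0)))).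
  apply: eq_bigr => j _; rewrite nc /cdot rmorph_sum mulr_suml.
  apply: eq_bigr => m _; rewrite mulr_sumr; apply: eq_bigr => m' _.
  rewrite rmorphM /= conjcK; ring.
rewrite /cdot exchange_big /=; apply: eq_bigr => m _.
rewrite exchange_big /= (bigD1 m) //=.
rewrite -mulr_sumr pq eqxx mulr1 big1 ?addr0 // => m' ne.
by rewrite -mulr_sumr pq (negbTE ne) mulr0.
Qed.

Lemma frame_sum N (H : 'M[R]_N) (phi : 'I_N -> 'cV[R[i]]_N) :
  (forall j k, cdot (phi j) (phi k) = (j == k)%:R) ->
  forall f : 'cV[R[i]]_N,
  \sum_(ij : 'I_N * 'I_N)
     `|cdot f (diag_mx (cmx (col ij.1 H))^T *m phi ij.2)| ^+ 2 =
  \sum_k f k 0 * conjc (f k 0) * real_complex R (\sum_i H k i ^+ 2).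
Proof.
move=> ortho f.
pose g i := \col_k (f k 0 * real_complex R (H k i)) : 'cV[R[i]]_N.
transitivity (\sum_i \sum_j `|cdot (g i) (phi j)| ^+ 2).
  rewrite pair_big /=; apply: eq_bigr => -[i j] _ /=.
  congr (`|_| ^+ 2); rewrite /cdot; apply: eq_bigr => k _.
  rewrite mul_diag_mx !mxE conj_realM; ring.
under eq_bigr do rewrite parseval //.
rewrite /cdot exchange_big /=; apply: eq_bigr => k _.
rewrite rmorph_sum mulr_sumr; apply: eq_bigr => i _.
rewrite !mxE (mulrC (f k 0) (real_complex R (H k i))) conj_realM rmorphXn /=; ring.
Qed.

End Complex.

Local Close Scope classical_set_scope.
Section Graph.
Variable R : realType.

Lemma lap_rowsum N (e : rel 'I_N) k : \sum_i (laplacian R e) k i = 0.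
Proof.
rewrite /laplacian; under eq_bigr do rewrite !mxE.
rewrite sumrB (bigD1 k) //= eqxx mul1r big1 ?addr0 => [|i /negPf ik]; last first.
  by rewrite eq_sym ik mul0r.
rewrite -natr_sum -sum1_card big_mkcond /=.
rewrite (_ : \sum_(i < N) (e k i : nat) = \sum_(i < N) (if i \in [set j | e k j] then 1 else 0))%N ?subrr //.
by apply: eq_bigr => i _; rewrite inE; case: (e k i).
Qed.

Lemma lap_perm N (e : rel 'I_N) (pi : {perm 'I_N}) :
  graph_automorphism e pi ->
  forall a b, (laplacian R e) (pi a) (pi b) = (laplacian R e) a b.
Proof.
move=> ha a b.
have hs : [set k | e (pi a) k] = pi @: [set k | e a k].
  apply/setP => k; rewrite inE; apply/idP/imsetP.
    move=> h; exists ((pi^-1)%g k); last by rewrite permKV.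
    by rewrite inE ha permKV.
  by move=> [x]; rewrite inE => hx ->; rewrite -ha.
rewrite /laplacian !mxE (inj_eq perm_inj) -ha hs card_imset //; exact: perm_inj.
Qed.

End Graph.

Theorem theorem4p2 (R : realType) (N : nat) (e : rel 'I_N)
  (phi : 'I_N -> 'cV[R[i]]_N) (lambda : 'I_N -> R[i]) :
  simple_graph e ->
  connected_graph e ->
  vertex_transitive e ->
  (* phi is an orthonormal basis of C^N ... *)
  (forall j k : 'I_N, cdot (phi j) (phi k) = (j == k)%:R) ->
  (* ... consisting of eigenvectors of L *)
  (forall j : 'I_N, cmx (laplacian R e) *m phi j = lambda j *: phi j) ->
  forall t : R, 0 <= t ->
    tight_frame (fun ij : 'I_N * 'I_N => heat_diag e t ij.1 *m phi ij.2).
Proof.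
move=> _ _ vt ortho _ t _.
set H := heat_kernel e t.
have key : forall x y, (-(t *: laplacian R e)) x y = - (t * laplacian R e x y).
  by move=> x y; rewrite mxE [X in - X]mxE.
have Hperm : forall pi : {perm 'I_N}, graph_automorphism e pi ->
    forall a b, H (pi a) (pi b) = H a b.
  move=> pi ha; apply: expmx_perm => a b.
  by rewrite !key lap_perm.
have Hrow : forall k, \sum_i H k i = 1.
  move=> k; apply: expmx_rowsum => k'.
  under eq_bigr do rewrite key.
  by rewrite sumrN -mulr_sumr lap_rowsum mulr0 oppr0.
rewrite /tight_frame /heat_diag.
case: (pickP (fun _ : 'I_N => true)) => [k0 _ | none]; last first.
  exists 1; split => // f.
  rewrite big1; last by move=> [i j]; have := none i.
  by rewrite /cdot big1 ?mulr0 // => i; have := none i.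
pose c := \sum_i H k0 i ^+ 2.
have hconst : forall k, \sum_i H k i ^+ 2 = c.
  move=> k; have [pi [ha hk]] := vt k0 k.
  rewrite -hk /c (reindex_inj (@perm_inj _ pi)) /=.
  by apply: eq_bigr => i _; rewrite Hperm.
have cpos : 0 < c.
  rewrite lt_def sumr_ge0 ?andbT => [|i _]; last exact: sqr_ge0.
  apply/negP => /eqP c0.
  have h0 : forall i, H k0 i = 0.
    move=> i; apply/eqP; rewrite -sqrf_eq0; apply/eqP.
    by move: c0 => /psumr_eq0P; apply => // j _; exact: sqr_ge0.
  have := Hrow k0; rewrite big1 // => /eqP; by rewrite eq_sym oner_eq0.
exists c; split => // f.
rewrite frame_sum // /cdot mulr_sumr; apply: eq_bigr => k _.
by rewrite hconst mulrC.
Qed.
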